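(* An abstract $b$-flip $f$ (a move $(t_1\cup t_2,b)\to(t'_1\cup t'_2,b')$ on a branched quadrilateral) is a sliding flip if and only if the following holds. For every $(S,V)$ and every application of $f$ to a branched ideal triangulation $(T,b)$ of $(S,V)$, producing $(T',b')$, one has $d_b(v)=d_{b'}(v)$ for every $v\in V$.
   Context: $(S,V)$ denotes a closed surface with a finite set of marked points, $\chi(S)-|V|<0$. Ideal triangulations have vertex set exactly $V$. A branching $b$ orients all edges so that on each abstract triangle the orientations are induced by a total order $v_0<v_1<v_2$ of its vertices, edges pointing to the larger endpoint. In such a branched triangle, the corner at the middle vertex $v_1$ (the corner formed by the two edges $v_0v_1,v_1v_2$ carrying the ''prevalent'' orientation) is called the $1$-labelled corner. For a vertex $v$, the number of $1$-labelled corners at $v$ is even, and is denoted $2d_b(v)$. An abstract $b$-flip acts on a quadrilateral $Q=t_1\cup t_2$ triangulated by two triangles sharing a diagonal $e$. It replaces them by the two triangles $t'_1,t'_2$ sharing the other diagonal $e'$, with an orientation of $e'$ making the result branched while the boundary edges of $Q$ keep their orientations. Such a $b$-flip is forced if it is the unique branched enhancement of the naked flip starting from $(t_1\cup t_2,b)$. It is a sliding flip ($s$-flip) if at least one of it and its inverse $b$-flip $(t'_1\cup t'_2,b')\to(t_1\cup t_2,b)$ is forced. *)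

(* Defs.v *)
From mathcomp Require Import all_boot all_fingroup.
Set Implicit Arguments. Unset Strict Implicit. Unset Printing Implicit Defensive.

(* Branched triangles: an orientation [ar] of the three edges of a    *)
(* triangle with vertices x y z is a branching if it is induced by a  *)
(* total order of x y z (edges point to the larger endpoint).         *)
Definition is_order (T : Type) (ar : T -> T -> bool) (a b c : T) :=
  [&& ar a b, ar b c & ar a c].

Definition branched_tri (T : Type) (ar : T -> T -> bool) (x y z : T) :=
  [|| is_order ar x y z, is_order ar x z y, is_order ar y x z,
      is_order ar y z x, is_order ar z x y | is_order ar z y x].

(* The abstract quadrilateral Q: vertices 0,1,2,3 in cyclic order,    *)
(* diagonal e = {0,2}, t1 = {0,1,2}, t2 = {0,2,3};                    *)
(* other diagonal e' = {1,3}, t1' = {0,1,3}, t2' = {1,2,3}.           *)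
Definition qv (k : nat) : 'I_4 := inord k.
Definition lab (s : seq nat) (i : 'I_3) : 'I_4 := qv (nth 0 s i).
Definition o3 (k : nat) : 'I_3 := inord k.

(* An abstract b-flip (t1 u t2, b) -> (t1' u t2', b'): an orientation   *)
(* [arr x y] ("edge xy points from x to y") of the four boundary edges *)
(* and of both diagonals e, e', such that t1, t2 (branching b) and     *)
(* t1', t2' (branching b') are branched.  Boundary edges carry the     *)
(* same orientation before and after, by construction.                 *)
Record bflip := BFlip {
  arr : 'I_4 -> 'I_4 -> bool;
  arr_anti : forall x y : 'I_4, x != y -> arr y x = ~~ arr x y;
  arr_t1 : branched_tri arr (qv 0) (qv 1) (qv 2);
  arr_t2 : branched_tri arr (qv 0) (qv 2) (qv 3);
  arr_t1' : branched_tri arr (qv 0) (qv 1) (qv 3);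
  arr_t2' : branched_tri arr (qv 1) (qv 2) (qv 3) }.

Definition reor (ar : 'I_4 -> 'I_4 -> bool) (x y : 'I_4) (b : bool) :=
  fun u v => if (u == x) && (v == y) then b
             else if (u == y) && (v == x) then ~~ b else ar u v.

(* f is forced: its orientation of e' is the unique one making the      *)
(* naked flip from (t1 u t2, b) branched.                               *)
Definition forced (f : bflip) : Prop :=
  forall b : bool,
    branched_tri (reor (arr f) (qv 1) (qv 3) b) (qv 0) (qv 1) (qv 3) ->
    branched_tri (reor (arr f) (qv 1) (qv 3) b) (qv 1) (qv 2) (qv 3) ->
    b = arr f (qv 1) (qv 3).

Definition inv_forced (f : bflip) : Prop :=
  forall b : bool,
    branched_tri (reor (arr f) (qv 0) (qv 2) b) (qv 0) (qv 1) (qv 2) ->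
    branched_tri (reor (arr f) (qv 0) (qv 2) b) (qv 0) (qv 2) (qv 3) ->
    b = arr f (qv 0) (qv 2).

Definition sliding (f : bflip) : Prop := forced f \/ inv_forced f.

(* Ideal triangulations of closed surfaces, combinatorially: n abstract *)
(* triangles 'I_n with corners 'I_3; side j of a triangle is the side  *)
(* opposite corner j.  A dart ((t, j), c) (with c != j) is the endpoint *)
(* c of side j of triangle t.  A gluing G pairs the sides, specifying  *)
(* which endpoint goes to which endpoint.                              *)
Definition dart (n : nat) := ('I_n * 'I_3 * 'I_3)%type.
Definition valid_dart n (d : dart n) := d.1.2 != d.2.

Record is_gluing n (G : dart n -> dart n) : Prop := {
  gl_valid : forall d, valid_dart d -> valid_dart (G d);
  gl_invol : forall d, valid_dart d -> G (G d) = d;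
  gl_side_ne : forall d, valid_dart d -> (G d).1 != d.1;
  gl_side : forall d d', valid_dart d -> valid_dart d' -> d.1 = d'.1 -> d != d' ->
      (G d).1 = (G d').1 /\ G d != G d' }.

Definition tri_adj n (G : dart n -> dart n) : rel 'I_n :=
  fun t u => [exists d : dart n, [&& d.1.1 == t, valid_dart d & (G d).1.1 == u]].

Definition connected_gl n (G : dart n -> dart n) : Prop :=
  forall t u : 'I_n, connect (tri_adj G) t u.

(* Corners identified across a glued side; the vertices of the         *)
(* triangulation (i.e. the marked points V) are the classes of corners *)
(* under [connect (corner_adj G)].                                      *)
Definition corner_adj n (G : dart n -> dart n) : rel ('I_n * 'I_3) :=
  fun c c' => [exists j : 'I_3,
     (j != c.2) && (((G (c.1, j, c.2)).1.1, (G (c.1, j, c.2)).2) == c')].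

(* A branching: an orientation [ba t x y] of the edges of each triangle, *)
(* branched on each triangle, and compatible with the gluing (so it is  *)
(* an orientation of the edges of the triangulation).                   *)
Record is_branching n (G : dart n -> dart n)
    (ba : 'I_n -> 'I_3 -> 'I_3 -> bool) : Prop := {
  br_anti : forall t (x y : 'I_3), x != y -> ba t y x = ~~ ba t x y;
  br_tri : forall t, branched_tri (ba t) (o3 0) (o3 1) (o3 2);
  br_glue : forall t (j p q : 'I_3), j != p -> j != q -> p != q ->
      ba t p q = ba (G (t, j, p)).1.1 (G (t, j, p)).2 (G (t, j, q)).2 }.

(* The corner c is 1-labelled: it is the middle vertex of the order. *)
Definition one_lab n (ba : 'I_n -> 'I_3 -> 'I_3 -> bool) (c : 'I_n * 'I_3) :=
  [exists a : 'I_3, exists b : 'I_3,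
     [&& a != c.2, b != c.2, ba c.1 a c.2 & ba c.1 c.2 b]].

(* d_b(v) for the vertex v containing the corner c: half the number of *)
(* 1-labelled corners at v.                                             *)
Definition dvert n (G : dart n -> dart n) (ba : 'I_n -> 'I_3 -> 'I_3 -> bool)
    (c : 'I_n * 'I_3) : nat :=
  #|[set x | connect (corner_adj G) c x && one_lab ba x]|./2.

(* Application of f to (T, b): triangle T1 realises t1 with the i-th    *)
(* vertex of (0,1,2) at corner p1 i; T2 realises t2 with the i-th      *)
(* vertex of (0,2,3) at corner p2 i; T1 and T2 are glued along e        *)
(* matching vertices 0 and 2, and b restricts to f's branching b.      *)
Definition applies n (G : dart n -> dart n) (ba : 'I_n -> 'I_3 -> 'I_3 -> bool)
    (f : bflip) (T1 T2 : 'I_n) (p1 p2 : {perm 'I_3}) : Prop :=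
  [/\ T1 != T2,
      G (T1, p1 (o3 1), p1 (o3 0)) = (T2, p2 (o3 2), p2 (o3 0)),
      G (T1, p1 (o3 1), p1 (o3 2)) = (T2, p2 (o3 2), p2 (o3 1)),
      forall i j : 'I_3, i != j ->
        ba T1 (p1 i) (p1 j) = arr f (lab [:: 0; 1; 2] i) (lab [:: 0; 1; 2] j) &
      forall i j : 'I_3, i != j ->
        ba T2 (p2 i) (p2 j) = arr f (lab [:: 0; 2; 3] i) (lab [:: 0; 2; 3] j)].

(* The result (T', b'): T1 becomes t1' = (0,1,3) (vertex 3 taking the   *)
(* corner p1 2), T2 becomes t2' = (1,2,3) (vertex 1 taking corner p2 0). *)
(* Edge 12 moves from side p1 0 of T1 to side p2 2 of T2, edge 03 from  *)
(* side p2 1 of T2 to side p1 1 of T1; the new diagonal 13 glues side   *)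
(* p1 0 of T1 to side p2 1 of T2.                                       *)
Section Flip.
Variables (n : nat) (T1 T2 : 'I_n) (p1 p2 : {perm 'I_3}).

Definition reloc (d : dart n) : dart n :=
  if d == (T1, p1 (o3 0), p1 (o3 1)) then (T2, p2 (o3 2), p2 (o3 0))
  else if d == (T1, p1 (o3 0), p1 (o3 2)) then (T2, p2 (o3 2), p2 (o3 1))
  else if d == (T2, p2 (o3 1), p2 (o3 0)) then (T1, p1 (o3 1), p1 (o3 0))
  else if d == (T2, p2 (o3 1), p2 (o3 2)) then (T1, p1 (o3 1), p1 (o3 2))
  else d.

Definition unreloc (d : dart n) : dart n :=
  if d == (T2, p2 (o3 2), p2 (o3 0)) then (T1, p1 (o3 0), p1 (o3 1))
  else if d == (T2, p2 (o3 2), p2 (o3 1)) then (T1, p1 (o3 0), p1 (o3 2))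
  else if d == (T1, p1 (o3 1), p1 (o3 0)) then (T2, p2 (o3 1), p2 (o3 0))
  else if d == (T1, p1 (o3 1), p1 (o3 2)) then (T2, p2 (o3 1), p2 (o3 2))
  else d.

Definition flip_glue (G : dart n -> dart n) (d : dart n) : dart n :=
  if d == (T1, p1 (o3 0), p1 (o3 1)) then (T2, p2 (o3 1), p2 (o3 0))
  else if d == (T1, p1 (o3 0), p1 (o3 2)) then (T2, p2 (o3 1), p2 (o3 2))
  else if d == (T2, p2 (o3 1), p2 (o3 0)) then (T1, p1 (o3 0), p1 (o3 1))
  else if d == (T2, p2 (o3 1), p2 (o3 2)) then (T1, p1 (o3 0), p1 (o3 2))
  else reloc (G (unreloc d)).

Definition flip_br (ba : 'I_n -> 'I_3 -> 'I_3 -> bool) (f : bflip)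
    (t : 'I_n) (x y : 'I_3) : bool :=
  if t == T1 then arr f (lab [:: 0; 1; 3] ((p1^-1)%g x)) (lab [:: 0; 1; 3] ((p1^-1)%g y))
  else if t == T2 then arr f (lab [:: 1; 2; 3] ((p2^-1)%g x)) (lab [:: 1; 2; 3] ((p2^-1)%g y))
  else ba t x y.

(* The identification of vertices (V is unchanged by the flip): a corner *)
(* of T is sent to a corner of T' at the same point of V.               *)
Definition flip_corner (c : 'I_n * 'I_3) : 'I_n * 'I_3 :=
  if c == (T1, p1 (o3 2)) then (T2, p2 (o3 1))
  else if c == (T2, p2 (o3 0)) then (T1, p1 (o3 0))
  else c.
End Flip.

(* Main.v *)
Require Import Defs.
From mathcomp Require Import all_boot all_fingroup zify.
Set Implicit Arguments. Unset Strict Implicit. Unset Printing Implicit Defensive.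

Notation O0 := (@Ordinal 3 0 isT).
Notation O1 := (@Ordinal 3 1 isT).
Notation O2 := (@Ordinal 3 2 isT).
Lemma o30 : o3 0 = O0. Proof. by apply: val_inj; rewrite /= inordK. Qed.
Lemma o31 : o3 1 = O1. Proof. by apply: val_inj; rewrite /= inordK. Qed.
Lemma o32 : o3 2 = O2. Proof. by apply: val_inj; rewrite /= inordK. Qed.
Lemma ord3P (a : 'I_3) : a = O0 \/ a = O1 \/ a = O2.
Proof.
case: a => [[|[|[|m]]] H]; [left|right;left|right;right|by []]; exact: val_inj.
Qed.

Lemma connect_lift (T U : finType) (e : rel T) (e' : rel U) (h : T -> U) :
  (forall x y, e x y -> connect e' (h x) (h y)) ->
  forall x y, connect e x y -> connect e' (h x) (h y).
Proof.
move=> H x y /connectP [p pth ->]; elim: p x pth => [|z p IH] x /=.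
  by rewrite connect0.
by case/andP => exz pz; apply: connect_trans (H _ _ exz) (IH _ pz).
Qed.

Definition corner n (d : dart n) : 'I_n * 'I_3 := (d.1.1, d.2).

Lemma adj_sym n (G : dart n -> dart n) : is_gluing G -> symmetric (corner_adj G).
Proof.
move=> Hg.
suff H : forall x y, corner_adj G x y -> corner_adj G y x.
  by move=> x y; apply/idP/idP; apply: H.
move=> [t k] y /existsP [j /andP [jk /eqP <-]] /=.
have vd : valid_dart (t, j, k) by [].
have ve := gl_valid Hg vd.
apply/existsP; exists (G (t, j, k)).1.2; move: ve; rewrite /valid_dart => -> /=.
by case E: (G (t,j,k)) => [[u l] m] /=; rewrite -E gl_invol.
Qed.

Lemma adj_dart n (G : dart n -> dart n) d :
  valid_dart d -> corner_adj G (corner d) (corner (G d)).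
Proof.
case: d => [[u l] m] v; apply/existsP; exists l; rewrite /= eqxx andbT.
by [].
Qed.

Definition olab (A : 'I_4 -> 'I_4 -> bool) (s : seq nat) (i : 'I_3) : bool :=
  [exists a : 'I_3, exists b : 'I_3,
     [&& a != i, b != i, A (lab s a) (lab s i) & A (lab s i) (lab s b)]].

Lemma exists_perm (T : finType) (p : {perm T}) (P : pred T) :
  [exists a, P a] = [exists a, P (p a)].
Proof.
apply/existsP/existsP => [[a Pa]|[a Pa]]; last by exists (p a).
by exists (p^-1 a)%g; rewrite permKV.
Qed.

Lemma card_sum (T : finType) (P : pred T) : #|[set x | P x]| = \sum_x (P x : nat).
Proof. by rewrite -sum1dep_card big_mkcond /=; apply: eq_bigr => x _; case: (P x). Qed.

Lemma sum3 (F : 'I_3 -> nat) : \sum_k F k = F O0 + F O1 + F O2.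
Proof.
rewrite !big_ord_recl big_ord0 addn0 addnA.
by congr (F _ + F _ + F _); apply: val_inj.
Qed.

Notation Q0 := (@Ordinal 4 0 isT).
Notation Q1 := (@Ordinal 4 1 isT).
Notation Q2 := (@Ordinal 4 2 isT).
Notation Q3 := (@Ordinal 4 3 isT).
Lemma qv0 : qv 0 = Q0. Proof. by apply: val_inj; rewrite /= inordK. Qed.
Lemma qv1 : qv 1 = Q1. Proof. by apply: val_inj; rewrite /= inordK. Qed.
Lemma qv2 : qv 2 = Q2. Proof. by apply: val_inj; rewrite /= inordK. Qed.
Lemma qv3 : qv 3 = Q3. Proof. by apply: val_inj; rewrite /= inordK. Qed.

Lemma exists3 (P : pred 'I_3) : [exists a, P a] = [|| P O0, P O1 | P O2].
Proof.
apply/existsP/or3P => [[a]|[]]; [|by exists O0 | by exists O1 | by exists O2].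
by case: (ord3P a) => [->|[->|->]] H; [apply: Or31|apply: Or32|apply: Or33].
Qed.

Definition slidingB (A : 'I_4 -> 'I_4 -> bool) :=
  ~~ (branched_tri (reor A (qv 1) (qv 3) (~~ A (qv 1) (qv 3))) (qv 0) (qv 1) (qv 3) &&
      branched_tri (reor A (qv 1) (qv 3) (~~ A (qv 1) (qv 3))) (qv 1) (qv 2) (qv 3)) ||
  ~~ (branched_tri (reor A (qv 0) (qv 2) (~~ A (qv 0) (qv 2))) (qv 0) (qv 1) (qv 2) &&
      branched_tri (reor A (qv 0) (qv 2) (~~ A (qv 0) (qv 2))) (qv 0) (qv 2) (qv 3)).

Lemma slidingP f : sliding f <-> slidingB (arr f).
Proof.
have key : forall (X Y : bool -> bool) (a : bool),
  (forall b, X b -> Y b -> b = a) <-> ~~ (X (~~ a) && Y (~~ a)).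
  move=> X Y a; split.
    move=> H; apply/negP => /andP [x y]; move: (H _ x y); case: (a) => /= E; discriminate.
  move=> H b x y; case: (eqVneq b a) => // nb.
  have E : b = ~~ a by move: nb; case: (a); case: (b).
  by move: H; rewrite -E x y.
have K1 := key (fun b => branched_tri (reor (arr f) (qv 1) (qv 3) b) (qv 0) (qv 1) (qv 3))
  (fun b => branched_tri (reor (arr f) (qv 1) (qv 3) b) (qv 1) (qv 2) (qv 3)) (arr f (qv 1) (qv 3)).
have K2 := key (fun b => branched_tri (reor (arr f) (qv 0) (qv 2) b) (qv 0) (qv 1) (qv 2))
  (fun b => branched_tri (reor (arr f) (qv 0) (qv 2) b) (qv 0) (qv 2) (qv 3)) (arr f (qv 0) (qv 2)).
rewrite /sliding /forced /inv_forced /slidingB.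
split.
  by case=> [/K1 /= -> | /K2 /= ->]; rewrite ?orbT.
by case/orP => [/K1 H|/K2 H]; [left|right].
Qed.

Definition pos_eqs (A : 'I_4 -> 'I_4 -> bool) :=
  [&& (olab A [:: 0;1;2] O0 + olab A [:: 0;2;3] O0 == olab A [:: 0;1;3] O0)%N,
      ((olab A [:: 0;1;2] O1 : nat) == olab A [:: 0;1;3] O1 + olab A [:: 1;2;3] O0)%N,
      (olab A [:: 0;1;2] O2 + olab A [:: 0;2;3] O1 == olab A [:: 1;2;3] O1)%N &
      ((olab A [:: 0;2;3] O2 : nat) == olab A [:: 0;1;3] O2 + olab A [:: 1;2;3] O2)%N].

Lemma pos_eq_all f :
  [&& branched_tri (arr f) (qv 0) (qv 1) (qv 2), branched_tri (arr f) (qv 0) (qv 2) (qv 3),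
      branched_tri (arr f) (qv 0) (qv 1) (qv 3) & branched_tri (arr f) (qv 1) (qv 2) (qv 3)]
   ==> (slidingB (arr f) == pos_eqs (arr f)).
Proof.
have r10 := arr_anti f (x:=Q0) (y:=Q1) isT.
have r20 := arr_anti f (x:=Q0) (y:=Q2) isT.
have r30 := arr_anti f (x:=Q0) (y:=Q3) isT.
have r21 := arr_anti f (x:=Q1) (y:=Q2) isT.
have r31 := arr_anti f (x:=Q1) (y:=Q3) isT.
have r32 := arr_anti f (x:=Q2) (y:=Q3) isT.
rewrite /pos_eqs /olab !exists3 /slidingB /branched_tri /is_order /reor /lab /=.
rewrite !(qv0, qv1, qv2, qv3) /= r10 r20 r30 r21 r31 r32.
move: (arr f Q0 Q1) (arr f Q0 Q2) (arr f Q0 Q3) (arr f Q1 Q2) (arr f Q1 Q3) (arr f Q2 Q3).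
by do 6 case.
Qed.

Section Main.
Local Opaque fun_of_perm.
Variables (n : nat) (G : dart n -> dart n) (ba : 'I_n -> 'I_3 -> 'I_3 -> bool)
  (f : bflip) (T1 T2 : 'I_n) (p1 p2 : {perm 'I_3}).
Hypothesis Hg : is_gluing G.
Hypothesis Ha : applies G ba f T1 T2 p1 p2.

Local Notation G' := (flip_glue T1 T2 p1 p2 G).
Local Notation C := (connect (corner_adj G)).
Local Notation C' := (connect (corner_adj G')).
Local Notation fc := (flip_corner T1 T2 p1 p2).

Lemma nT : T1 != T2. Proof. by case: Ha. Qed.
Lemma nT' : T2 != T1. Proof. by rewrite eq_sym nT. Qed.
Lemma GA : G (T1, p1 O1, p1 O0) = (T2, p2 O2, p2 O0).
Proof. by case: Ha; rewrite o30 o31 o32. Qed.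
Lemma GB : G (T1, p1 O1, p1 O2) = (T2, p2 O2, p2 O1).
Proof. by case: Ha; rewrite o30 o31 o32. Qed.
Lemma GA' : G (T2, p2 O2, p2 O0) = (T1, p1 O1, p1 O0).
Proof. by rewrite -GA gl_invol //= /valid_dart /= (inj_eq perm_inj). Qed.
Lemma GB' : G (T2, p2 O2, p2 O1) = (T1, p1 O1, p1 O2).
Proof. by rewrite -GB gl_invol //= /valid_dart /= (inj_eq perm_inj). Qed.

Lemma eD11 a b c d : ((T1, p1 a, p1 b) == (T1, p1 c, p1 d)) = (a == c) && (b == d).
Proof. by rewrite !xpair_eqE eqxx !(inj_eq perm_inj). Qed.
Lemma eD22 a b c d : ((T2, p2 a, p2 b) == (T2, p2 c, p2 d)) = (a == c) && (b == d).
Proof. by rewrite !xpair_eqE eqxx !(inj_eq perm_inj). Qed.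
Lemma eD12 a b c d : ((T1, p1 a, p1 b) == (T2, p2 c, p2 d)) = false.
Proof. by rewrite !xpair_eqE (negbTE nT). Qed.
Lemma eD21 a b c d : ((T2, p2 a, p2 b) == (T1, p1 c, p1 d)) = false.
Proof. by rewrite !xpair_eqE (negbTE nT'). Qed.
Lemma eC11 a c : ((T1, p1 a) == (T1, p1 c)) = (a == c).
Proof. by rewrite !xpair_eqE eqxx !(inj_eq perm_inj). Qed.
Lemma eC22 a c : ((T2, p2 a) == (T2, p2 c)) = (a == c).
Proof. by rewrite !xpair_eqE eqxx !(inj_eq perm_inj). Qed.
Lemma eC12 a c : ((T1, p1 a) == (T2, p2 c)) = false.
Proof. by rewrite !xpair_eqE (negbTE nT). Qed.
Lemma eC21 a c : ((T2, p2 a) == (T1, p1 c)) = false.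
Proof. by rewrite !xpair_eqE (negbTE nT'). Qed.
Lemma eDo t j k a b (ht : t != T1) (ht' : t != T2) :
  ((t, j, k) == (T1, p1 a, p1 b)) = false /\ ((t, j, k) == (T2, p2 a, p2 b)) = false.
Proof. by rewrite !xpair_eqE (negbTE ht) (negbTE ht'). Qed.
Lemma eCo t k a (ht : t != T1) (ht' : t != T2) :
  ((t, k) == (T1, p1 a)) = false /\ ((t, k) == (T2, p2 a)) = false.
Proof. by rewrite !xpair_eqE (negbTE ht) (negbTE ht'). Qed.
Lemma ep1 a b : (p1 a == p1 b) = (a == b). Proof. exact: (inj_eq (@perm_inj _ _)). Qed.
Lemma ep2 a b : (p2 a == p2 b) = (a == b). Proof. exact: (inj_eq (@perm_inj _ _)). Qed.

Ltac simp2 := rewrite ?eD11 ?eD22 ?eD12 ?eD21 ?eC11 ?eC22 ?eC12 ?eC21 ?ep1 ?ep2;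
  try match goal with H : is_true (?t != T1), H' : is_true (?t != T2) |- _ =>
    rewrite ?(proj1 (eDo _ _ _ _ H H')) ?(proj2 (eDo _ _ _ _ H H'))
            ?(proj1 (eCo _ _ H H')) ?(proj2 (eCo _ _ H H')) end; rewrite /=.

Ltac simp1 := rewrite ?xpair_eqE ?(inj_eq perm_inj) ?eqxx /= ?(negbTE nT) ?(negbTE nT') /=;
  repeat match goal with H : (?a == ?b) = false |- context [?a == ?b] => rewrite H end; rewrite /=.
Ltac simp := simp1; simp1.

Definition rho (c : 'I_n * 'I_3) :=
  if c == (T1, p1 O2) then (T2, p2 O2) else if c == (T2, p2 O0) then (T1, p1 O1) else c.
Definition od (d : dart n) := [|| d == (T1,p1 O1,p1 O0), d == (T1,p1 O1,p1 O2),
   d == (T2,p2 O2,p2 O0) | d == (T2,p2 O2,p2 O1)].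
Definition nd (d : dart n) := [|| d == (T1,p1 O0,p1 O1), d == (T1,p1 O0,p1 O2),
   d == (T2,p2 O1,p2 O0) | d == (T2,p2 O1,p2 O2)].

Lemma od_G d : valid_dart d -> ~~ od d -> ~~ od (G d).
Proof.
move=> vd; apply: contra => /or4P [] /eqP E;
  by rewrite -(gl_invol Hg vd) E ?GA ?GB ?GA' ?GB' /od; simp.
Qed.

Lemma A1 : corner_adj G (T1,p1 O0) (T2,p2 O0).
Proof. by apply/existsP; exists (p1 O1); rewrite /= GA; simp. Qed.
Lemma A2 : corner_adj G (T2,p2 O0) (T1,p1 O0).
Proof. by apply/existsP; exists (p2 O2); rewrite /= GA'; simp. Qed.
Lemma A3 : corner_adj G (T1,p1 O2) (T2,p2 O1).
Proof. by apply/existsP; exists (p1 O1); rewrite /= GB; simp. Qed.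
Lemma A4 : corner_adj G (T2,p2 O1) (T1,p1 O2).
Proof. by apply/existsP; exists (p2 O2); rewrite /= GB'; simp. Qed.
Lemma B1 : corner_adj G' (T1,p1 O1) (T2,p2 O0).
Proof. by apply/existsP; exists (p1 O0); rewrite /= /flip_glue !(o30,o31,o32); simp. Qed.
Lemma B2 : corner_adj G' (T2,p2 O0) (T1,p1 O1).
Proof. by apply/existsP; exists (p2 O1); rewrite /= /flip_glue !(o30,o31,o32); simp. Qed.
Lemma B3 : corner_adj G' (T1,p1 O2) (T2,p2 O2).
Proof. by apply/existsP; exists (p1 O0); rewrite /= /flip_glue !(o30,o31,o32); simp. Qed.
Lemma B4 : corner_adj G' (T2,p2 O2) (T1,p1 O2).
Proof. by apply/existsP; exists (p2 O1); rewrite /= /flip_glue !(o30,o31,o32); simp. Qed.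


Ltac dcase :=
  let t := fresh "t" in let j := fresh "j" in let k := fresh "k" in
  case=> [[t j] k];
  case: (eqVneq t T1) => [->|tT1];
  [ rewrite -[j](permKV p1) -[k](permKV p1);
    case: (ord3P (p1^-1 j)%g) => [->|[->|->]]; case: (ord3P (p1^-1 k)%g) => [->|[->|->]]
  | case: (eqVneq t T2) => [->|tT2];
    [ rewrite -[j](permKV p2) -[k](permKV p2);
      case: (ord3P (p2^-1 j)%g) => [->|[->|->]]; case: (ord3P (p2^-1 k)%g) => [->|[->|->]]
    | have eT1 := negbTE tT1; have eT2 := negbTE tT2 ] ].

Ltac close := intros; first [ assumption | discriminate | reflexivity | by rewrite connect0
  | apply: connect1; first [exact: A1|exact: A2|exact: A3|exact: A4|exact: B1|exact: B2|exact: B3|exact: B4]].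

Lemma L1 d : valid_dart d -> ~~ nd d -> C (rho (corner d)) (corner (unreloc T1 T2 p1 p2 d)).
Proof.
move: d; rewrite /valid_dart /nd /rho /unreloc /corner !(o30,o31,o32).
dcase; simp2; simp2; close.
Qed.

Lemma L2 e : valid_dart e -> ~~ od e -> C (corner e) (rho (corner (reloc T1 T2 p1 p2 e))).
Proof.
move: e; rewrite /valid_dart /od /rho /reloc /corner !(o30,o31,o32).
dcase; simp2; simp2; close.
Qed.

Lemma L3 d : valid_dart d -> nd d -> rho (corner d) = rho (corner (G' d)).
Proof.
move: d; rewrite /valid_dart /nd /rho /flip_glue /corner !(o30,o31,o32).
dcase; simp2; simp2; close.
Qed.

Lemma Lunv d : valid_dart d -> valid_dart (unreloc T1 T2 p1 p2 d).
Proof.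
move: d; rewrite /valid_dart /unreloc !(o30,o31,o32).
dcase; simp2; simp2; close.
Qed.

Lemma Lndod d : valid_dart d -> ~~ nd d -> ~~ od (unreloc T1 T2 p1 p2 d).
Proof.
move: d; rewrite /valid_dart /nd /od /unreloc !(o30,o31,o32).
dcase; simp2; simp2; close.
Qed.

Lemma Lglue d : ~~ nd d -> G' d = reloc T1 T2 p1 p2 (G (unreloc T1 T2 p1 p2 d)).
Proof.
rewrite /nd /flip_glue !(o30,o31,o32).
by case/norP => /negbTE -> /norP [/negbTE -> /norP [/negbTE -> /negbTE ->]].
Qed.

Lemma adj_sym' : connect_sym (corner_adj G).
Proof. exact/sym_connect_sym/adj_sym. Qed.

Lemma Ladj' x y : corner_adj G' x y -> C (rho x) (rho y).
Proof.
case: x => t k /existsP [j /andP [jk /eqP E]].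
have vd : valid_dart (t, j, k) by [].
case: (boolP (nd (t, j, k))) => ndd.
  by rewrite -E; have /= -> := L3 vd ndd; rewrite connect0.
rewrite Lglue // in E.
set d0 := unreloc T1 T2 p1 p2 (t, j, k) in E.
have v0 : valid_dart d0 := Lunv vd.
have o0 : ~~ od d0 := Lndod vd ndd.
have ve : valid_dart (G d0) := gl_valid Hg v0.
have oe : ~~ od (G d0) := od_G v0 o0.
apply: connect_trans (L1 vd ndd) _.
rewrite -E; apply: connect_trans _ (L2 ve oe).
exact/connect1/adj_dart.
Qed.

Lemma L1' d : valid_dart d -> ~~ od d -> C' (fc (corner d)) (corner (reloc T1 T2 p1 p2 d)).
Proof.
move: d; rewrite /valid_dart /od /flip_corner /reloc /corner !(o30,o31,o32).
dcase; simp2; simp2; close.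
Qed.

Lemma L2' e : valid_dart e -> ~~ od e -> C' (corner (reloc T1 T2 p1 p2 e)) (fc (corner e)).
Proof.
move: e; rewrite /valid_dart /od /flip_corner /reloc /corner !(o30,o31,o32).
dcase; simp2; simp2; close.
Qed.

Lemma L3' d : valid_dart d -> od d -> fc (corner d) = fc (corner (G d)).
Proof.
move: d; rewrite /valid_dart /od /flip_corner /corner !(o30,o31,o32).
dcase; simp2; simp2; rewrite ?GA ?GB ?GA' ?GB'; simp2; simp2; close.
Qed.

Lemma Lrv d : valid_dart d -> valid_dart (reloc T1 T2 p1 p2 d).
Proof.
move: d; rewrite /valid_dart /reloc !(o30,o31,o32).
dcase; simp2; simp2; close.
Qed.

Lemma Lrel d : valid_dart d -> ~~ od d -> G' (reloc T1 T2 p1 p2 d) = reloc T1 T2 p1 p2 (G d).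
Proof.
move: d; rewrite /valid_dart /od /flip_glue /reloc /unreloc !(o30,o31,o32).
dcase; simp2; simp2; close.
Qed.

Lemma Ladj x y : corner_adj G x y -> C' (fc x) (fc y).
Proof.
case: x => t k /existsP [j /andP [jk /eqP E]].
have vd : valid_dart (t, j, k) by [].
case: (boolP (od (t, j, k))) => odd.
  by rewrite -E; have /= -> := L3' vd odd; rewrite connect0.
have ve : valid_dart (G (t, j, k)) := gl_valid Hg vd.
have oe : ~~ od (G (t, j, k)) := od_G vd odd.
apply: connect_trans (L1' vd odd) _.
rewrite -E; apply: connect_trans _ (L2' ve oe).
by apply/connect1; rewrite -Lrel //; apply/adj_dart/Lrv.
Qed.

Lemma LT1 i : one_lab ba (T1, p1 i) = olab (arr f) [:: 0; 1; 2] i.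
Proof.
rewrite /one_lab /olab /= (exists_perm p1); apply: eq_existsb => a.
rewrite (exists_perm p1); apply: eq_existsb => b /=.
rewrite !ep1; case: (eqVneq a i) => [->|ai] //=; case: (eqVneq b i) => [->|bi] //=.
have [_ _ _ H _] := Ha.
by rewrite (H _ _ ai) (H i b) // eq_sym.
Qed.

Lemma LT2 i : one_lab ba (T2, p2 i) = olab (arr f) [:: 0; 2; 3] i.
Proof.
rewrite /one_lab /olab /= (exists_perm p2); apply: eq_existsb => a.
rewrite (exists_perm p2); apply: eq_existsb => b /=.
rewrite !ep2; case: (eqVneq a i) => [->|ai] //=; case: (eqVneq b i) => [->|bi] //=.
have [_ _ _ _ H] := Ha.
by rewrite (H _ _ ai) (H i b) // eq_sym.
Qed.

Local Notation ba' := (flip_br T1 T2 p1 p2 ba f).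

Lemma LT1' i : one_lab ba' (T1, p1 i) = olab (arr f) [:: 0; 1; 3] i.
Proof.
rewrite /one_lab /olab /flip_br /= eqxx (exists_perm p1); apply: eq_existsb => a.
rewrite (exists_perm p1); apply: eq_existsb => b /=.
by rewrite !ep1 !permK.
Qed.

Lemma LT2' i : one_lab ba' (T2, p2 i) = olab (arr f) [:: 1; 2; 3] i.
Proof.
rewrite /one_lab /olab /flip_br /= eqxx (negbTE nT') (exists_perm p2); apply: eq_existsb => a.
rewrite (exists_perm p2); apply: eq_existsb => b /=.
by rewrite !ep2 !permK.
Qed.

Lemma Lout t k : t != T1 -> t != T2 -> one_lab ba' (t, k) = one_lab ba (t, k).
Proof. by move=> h1 h2; rewrite /one_lab /flip_br /= (negbTE h1) (negbTE h2). Qed.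

Lemma sum_split (F : 'I_n * 'I_3 -> nat) :
  \sum_x F x = \sum_(t | (t != T1) && (t != T2)) \sum_k F (t, k)
    + (F (T1, p1 O0) + F (T1, p1 O1) + F (T1, p1 O2))
    + (F (T2, p2 O0) + F (T2, p2 O1) + F (T2, p2 O2)).
Proof.
have -> : \sum_x F x = \sum_t \sum_k F (t, k).
  by rewrite pair_big /=; apply: eq_bigr => -[t k].
rewrite (bigD1 T1) //= (bigD1 T2) /=; last by rewrite nT'.
have S t (p : {perm 'I_3}) : \sum_k F (t, k) = F (t, p O0) + F (t, p O1) + F (t, p O2).
  by rewrite (reindex_inj (@perm_inj _ p)) sum3.
rewrite (S T1 p1) (S T2 p2).
rewrite [RHS]addnAC [RHS]addnC; congr (_ + _); exact: addnC.
Qed.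

Ltac ccase :=
  let t := fresh "t" in let k := fresh "k" in
  case=> [t k];
  case: (eqVneq t T1) => [->|tT1];
  [ rewrite -[k](permKV p1); case: (ord3P (p1^-1 k)%g) => [->|[->|->]]
  | case: (eqVneq t T2) => [->|tT2];
    [ rewrite -[k](permKV p2); case: (ord3P (p2^-1 k)%g) => [->|[->|->]] | ] ].

Lemma Lrf c : C c (rho (fc c)).
Proof. move: c; rewrite /rho /flip_corner !(o30,o31,o32); ccase; simp2; simp2; close. Qed.

Lemma Lfr y : C' (fc (rho y)) y.
Proof. move: y; rewrite /rho /flip_corner !(o30,o31,o32); ccase; simp2; simp2; close. Qed.

Lemma LCC c y : C' (fc c) y = C c (rho y).
Proof.
apply/idP/idP => H.
  exact: connect_trans (Lrf c) (connect_lift Ladj' H).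
exact: connect_trans (connect_lift Ladj H) (Lfr y).
Qed.

Lemma Ceq0 c : C c (T2, p2 O0) = C c (T1, p1 O0).
Proof. by apply/idP/idP => H; apply: connect_trans H (connect1 _); [exact: A2|exact: A1]. Qed.
Lemma Ceq1 c : C c (T2, p2 O1) = C c (T1, p1 O2).
Proof. by apply/idP/idP => H; apply: connect_trans H (connect1 _); [exact: A4|exact: A3]. Qed.

Lemma rho10 : rho (T1, p1 O0) = (T1, p1 O0). Proof. by rewrite /rho; simp2; simp2. Qed.
Lemma rho11 : rho (T1, p1 O1) = (T1, p1 O1). Proof. by rewrite /rho; simp2; simp2. Qed.
Lemma rho12 : rho (T1, p1 O2) = (T2, p2 O2). Proof. by rewrite /rho; simp2; simp2. Qed.
Lemma rho20 : rho (T2, p2 O0) = (T1, p1 O1). Proof. by rewrite /rho; simp2; simp2. Qed.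
Lemma rho21 : rho (T2, p2 O1) = (T2, p2 O1). Proof. by rewrite /rho; simp2; simp2. Qed.
Lemma rho22 : rho (T2, p2 O2) = (T2, p2 O2). Proof. by rewrite /rho; simp2; simp2. Qed.
Lemma rho_out t k : t != T1 -> t != T2 -> rho (t, k) = (t, k).
Proof. by move=> h1 h2; rewrite /rho !xpair_eqE (negbTE h1) (negbTE h2). Qed.

Local Notation A := (arr f).

Lemma count_before c :
  #|[set x | C c x && one_lab ba x]| =
  \sum_(t | (t != T1) && (t != T2)) \sum_k (C c (t, k) && one_lab ba (t, k) : nat)
  + ((C c (T1, p1 O0) && olab A [:: 0;1;2] O0) + (C c (T1, p1 O1) && olab A [:: 0;1;2] O1)
     + (C c (T1, p1 O2) && olab A [:: 0;1;2] O2))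
  + ((C c (T1, p1 O0) && olab A [:: 0;2;3] O0) + (C c (T1, p1 O2) && olab A [:: 0;2;3] O1)
     + (C c (T2, p2 O2) && olab A [:: 0;2;3] O2)).
Proof. by rewrite card_sum sum_split /= !LT1 !LT2 Ceq0 Ceq1. Qed.

Lemma count_after c :
  #|[set y | C' (fc c) y && one_lab ba' y]| =
  \sum_(t | (t != T1) && (t != T2)) \sum_k (C c (t, k) && one_lab ba (t, k) : nat)
  + ((C c (T1, p1 O0) && olab A [:: 0;1;3] O0) + (C c (T1, p1 O1) && olab A [:: 0;1;3] O1)
     + (C c (T2, p2 O2) && olab A [:: 0;1;3] O2))
  + ((C c (T1, p1 O1) && olab A [:: 1;2;3] O0) + (C c (T1, p1 O2) && olab A [:: 1;2;3] O1)
     + (C c (T2, p2 O2) && olab A [:: 1;2;3] O2)).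
Proof.
rewrite card_sum sum_split /= !LCC !LT1' !LT2' rho10 rho11 rho12 rho20 rho21 rho22 Ceq1.
congr (_ + _ + _); apply: eq_bigr => t /andP [h1 h2]; apply: eq_bigr => k _.
by rewrite LCC rho_out // Lout.
Qed.

Lemma if_dir c : slidingB A -> dvert G ba c = dvert G' ba' (fc c).
Proof.
move=> Hs; rewrite /dvert count_before count_after.
have br : [&& branched_tri A (qv 0) (qv 1) (qv 2), branched_tri A (qv 0) (qv 2) (qv 3),
      branched_tri A (qv 0) (qv 1) (qv 3) & branched_tri A (qv 1) (qv 2) (qv 3)].
  by rewrite (arr_t1 f) (arr_t2 f) (arr_t1' f) (arr_t2' f).
have := pos_eq_all f; rewrite br Hs /= => /eqP/esym.
rewrite /pos_eqs => /and4P [/eqP e0 /eqP e1 /eqP e2 /eqP e3].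
congr (_./2).
move: (\sum_(t | _) _) => X.
rewrite -!mulnb; move: e0 e1 e2 e3.
move: (nat_of_bool (olab A [:: 0;1;2] O0)) (nat_of_bool (olab A [:: 0;1;2] O1))
  (nat_of_bool (olab A [:: 0;1;2] O2)) (nat_of_bool (olab A [:: 0;2;3] O0))
  (nat_of_bool (olab A [:: 0;2;3] O1)) (nat_of_bool (olab A [:: 0;2;3] O2))
  (nat_of_bool (olab A [:: 0;1;3] O0)) (nat_of_bool (olab A [:: 0;1;3] O1))
  (nat_of_bool (olab A [:: 0;1;3] O2)) (nat_of_bool (olab A [:: 1;2;3] O0))
  (nat_of_bool (olab A [:: 1;2;3] O1)) (nat_of_bool (olab A [:: 1;2;3] O2)).
move=> a0 a1 a2 b0 b1 b2 d0 d1 d2 g0 g1 g2.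
move: (nat_of_bool (C c (T1, p1 O0))) (nat_of_bool (C c (T1, p1 O1)))
  (nat_of_bool (C c (T1, p1 O2))) (nat_of_bool (C c (T2, p2 O2))) => x0 x1 x2 x3.
move=> e0 e1 e2 e3; rewrite -e0 e1 -e2 e3; lia.
Qed.

End Main.

(* The converse: a concrete triangulation (a sphere with 3 vertices).  *)

Notation Z0 := (@Ordinal 2 0 isT).
Notation Z1 := (@Ordinal 2 1 isT).
Lemma ord2P (a : 'I_2) : a = Z0 \/ a = Z1.
Proof. case: a => [[|[|m]] H]; [left|right|by []]; exact: val_inj. Qed.

Definition G0 (d : dart 2) : dart 2 :=
  if d == (Z0,O1,O0) then (Z1,O2,O0) else if d == (Z1,O2,O0) then (Z0,O1,O0)
  else if d == (Z0,O1,O2) then (Z1,O2,O1) else if d == (Z1,O2,O1) then (Z0,O1,O2)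
  else if d == (Z0,O2,O0) then (Z1,O1,O0) else if d == (Z1,O1,O0) then (Z0,O2,O0)
  else if d == (Z0,O2,O1) then (Z1,O1,O2) else if d == (Z1,O1,O2) then (Z0,O2,O1)
  else if d == (Z0,O0,O1) then (Z1,O0,O2) else if d == (Z1,O0,O2) then (Z0,O0,O1)
  else if d == (Z0,O0,O2) then (Z1,O0,O1) else if d == (Z1,O0,O1) then (Z0,O0,O2)
  else d.

Definition vmap (t : 'I_2) (x : 'I_3) : 'I_4 :=
  if t == Z0 then (match val x with 0 => Q0 | 1 => Q1 | _ => Q2 end)
  else (match val x with 0 => Q0 | 1 => Q2 | _ => Q3 end).

Definition ba0 (A : 'I_4 -> 'I_4 -> bool) (t : 'I_2) (x y : 'I_3) := A (vmap t x) (vmap t y).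

Ltac dd := let t := fresh "t" in let j := fresh "j" in let k := fresh "k" in
  case=> [[t j] k]; case: (ord2P t) => ->;
  case: (ord3P j) => [->|[->|->]]; case: (ord3P k) => [->|[->|->]].

Ltac fin := intros; simpl in *; try discriminate; try done.

Lemma G0_gluing : is_gluing G0.
Proof.
split.
- by dd; fin.
- by dd; fin.
- by dd; fin.
- move=> [[t j] k] [[t' j'] k'] /= v v' E; case: E => Et Ej; subst t' j'; move: v v'.
  case: (ord2P t) => ->; case: (ord3P j) => [->|[->|->]];
    case: (ord3P k) => [->|[->|->]]; case: (ord3P k') => [->|[->|->]]; fin.
Qed.

Lemma G0_conn : connected_gl G0.
Proof.
move=> t u; case: (ord2P t) => ->; case: (ord2P u) => ->; rewrite ?connect0 //;
  apply: connect1; apply/existsP; [exists (Z0,O1,O0) | exists (Z1,O2,O0)]; by [].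
Qed.

Definition vlab (c : 'I_2 * 'I_3) : nat :=
  if c.1 == Z0 then nat_of_ord c.2 else (match val c.2 with 0 => 0 | 1 => 2 | _ => 1 end).

Lemma vlab_adj x y : corner_adj G0 x y -> vlab x = vlab y.
Proof.
case: x => t k /existsP [j /andP [_ /eqP <-]].
case: (ord2P t) => ->; case: (ord3P j) => [->|[->|->]]; case: (ord3P k) => [->|[->|->]]; by [].
Qed.

Lemma vlab_conn x y : connect (corner_adj G0) x y -> vlab x = vlab y.
Proof.
move/connectP => [p pth ->]; elim: p x pth => //= z p IH x /andP [a b].
by rewrite (vlab_adj a) (IH _ b).
Qed.

Lemma nonslide f : ~~ slidingB (arr f) ->
  [&& arr f Q0 Q3 == arr f Q0 Q1, arr f Q2 Q3 == ~~ arr f Q1 Q2 &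
   ((olab (arr f) [:: 0;1;2] O0 + olab (arr f) [:: 0;2;3] O0 == 2)
      && (olab (arr f) [:: 0;1;3] O0 == 0 :> nat))
   || ((olab (arr f) [:: 0;1;2] O2 + olab (arr f) [:: 0;2;3] O1 == 2)
      && (olab (arr f) [:: 1;2;3] O1 == 0 :> nat))].
Proof.
have : [&& branched_tri (arr f) (qv 0) (qv 1) (qv 2), branched_tri (arr f) (qv 0) (qv 2) (qv 3),
      branched_tri (arr f) (qv 0) (qv 1) (qv 3) & branched_tri (arr f) (qv 1) (qv 2) (qv 3)].
  by rewrite (arr_t1 f) (arr_t2 f) (arr_t1' f) (arr_t2' f).
move=> br; apply/implyP; move: br; apply/implyP.
have r10 := arr_anti f (x:=Q0) (y:=Q1) isT.
have r20 := arr_anti f (x:=Q0) (y:=Q2) isT.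
have r30 := arr_anti f (x:=Q0) (y:=Q3) isT.
have r21 := arr_anti f (x:=Q1) (y:=Q2) isT.
have r31 := arr_anti f (x:=Q1) (y:=Q3) isT.
have r32 := arr_anti f (x:=Q2) (y:=Q3) isT.
rewrite /olab !exists3 /slidingB /branched_tri /is_order /reor /lab /=.
rewrite !(qv0, qv1, qv2, qv3) /= r10 r20 r30 r21 r31 r32.
move: (arr f Q0 Q1) (arr f Q0 Q2) (arr f Q0 Q3) (arr f Q1 Q2) (arr f Q1 Q3) (arr f Q2 Q3).
by do 6 case.
Qed.

Section Conv.
Variable f : bflip.
Hypothesis bnd1 : arr f Q0 Q3 = arr f Q0 Q1.
Hypothesis bnd2 : arr f Q2 Q3 = ~~ arr f Q1 Q2.

Let r10 := arr_anti f (x:=Q0) (y:=Q1) isT.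
Let r20 := arr_anti f (x:=Q0) (y:=Q2) isT.
Let r30 := arr_anti f (x:=Q0) (y:=Q3) isT.
Let r21 := arr_anti f (x:=Q1) (y:=Q2) isT.
Let r31 := arr_anti f (x:=Q1) (y:=Q3) isT.
Let r32 := arr_anti f (x:=Q2) (y:=Q3) isT.

Ltac bits := rewrite ?r10 ?r20 ?r30 ?r21 ?r31 ?r32 ?bnd1 ?bnd2;
  move: (arr f Q0 Q1) (arr f Q0 Q2) (arr f Q1 Q2) (arr f Q1 Q3);
  do 4 case; fin.

Lemma G0_branching : is_branching G0 (ba0 (arr f)).
Proof.
split.
- move=> t x y; case: (ord2P t) => ->; case: (ord3P x) => [->|[->|->]];
    case: (ord3P y) => [->|[->|->]]; rewrite /ba0 /vmap /=; bits.
- move=> t; move: (arr_t1 f) (arr_t2 f).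
  rewrite /branched_tri /is_order !(qv0, qv1, qv2, qv3) !(o30, o31, o32).
  case: (ord2P t) => ->; rewrite /ba0 /vmap /=; bits.
- move=> t j p q; case: (ord2P t) => ->; case: (ord3P j) => [->|[->|->]];
    case: (ord3P p) => [->|[->|->]]; case: (ord3P q) => [->|[->|->]];
    rewrite /ba0 /G0 /vmap /=; bits.
Qed.

End Conv.

Lemma labv i : lab [:: 0;1;2] i = vmap Z0 i /\ lab [:: 0;2;3] i = vmap Z1 i.
Proof. by case: (ord3P i) => [->|[->|->]]; rewrite /lab /= ?(qv0, qv1, qv2, qv3). Qed.

Lemma G0_applies f : applies G0 (ba0 (arr f)) f Z0 Z1 1 1.
Proof.
split.
- by [].
- by rewrite !perm1 !(o30, o31, o32).
- by rewrite !perm1 !(o30, o31, o32).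
- by move=> i j _; rewrite !perm1 /ba0 (proj1 (labv i)) (proj1 (labv j)).
- by move=> i j _; rewrite !perm1 /ba0 (proj2 (labv i)) (proj2 (labv j)).
Qed.

Lemma sum0_2 (F : 'I_2 -> nat) : \sum_(t | (t != Z0) && (t != Z1)) F t = 0.
Proof. by rewrite big_pred0 // => t; case: (ord2P t) => ->. Qed.

Lemma Cf x y : vlab x != vlab y -> connect (corner_adj G0) x y = false.
Proof. by move=> h; apply/negP => /vlab_conn /eqP; rewrite (negbTE h). Qed.

Lemma only_if f :
  (forall (n : nat) (G : dart n -> dart n) (ba : 'I_n -> 'I_3 -> 'I_3 -> bool)
          (T1 T2 : 'I_n) (p1 p2 : {perm 'I_3}),
     0 < n -> is_gluing G -> connected_gl G -> is_branching G ba ->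
     applies G ba f T1 T2 p1 p2 ->
     forall c : 'I_n * 'I_3,
       dvert G ba c =
       dvert (flip_glue T1 T2 p1 p2 G) (flip_br T1 T2 p1 p2 ba f)
             (flip_corner T1 T2 p1 p2 c)) -> slidingB (arr f).
Proof.
move=> H; apply/negPn/negP => nS.
have /and3P [/eqP bnd1 /eqP bnd2 vals] := nonslide nS.
have HB := G0_branching bnd1 bnd2.
have HA := G0_applies f.
have Hc := H 2 G0 (ba0 (arr f)) Z0 Z1 1%g 1%g isT G0_gluing G0_conn HB HA.
have K c := etrans (esym (congr1 half (count_before G0_gluing HA c)))
  (etrans (Hc c) (congr1 half (count_after G0_gluing HA c))).
move: (K (Z0, O0)) (K (Z0, O2)) => {K Hc H}.
rewrite !perm1 !sum0_2 !connect0.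
rewrite !Cf //= !addn0 !add0n.
case/orP: vals => /andP [/eqP a /eqP b]; [rewrite a b | rewrite a b]; by [].
Qed.

Theorem proposition2p1 (f : bflip) :
  sliding f <->
  (forall (n : nat) (G : dart n -> dart n) (ba : 'I_n -> 'I_3 -> 'I_3 -> bool)
          (T1 T2 : 'I_n) (p1 p2 : {perm 'I_3}),
     0 < n -> is_gluing G -> connected_gl G -> is_branching G ba ->
     applies G ba f T1 T2 p1 p2 ->
     forall c : 'I_n * 'I_3,
       dvert G ba c =
       dvert (flip_glue T1 T2 p1 p2 G) (flip_br T1 T2 p1 p2 ba f)
             (flip_corner T1 T2 p1 p2 c)).
Proof.
split.
  move=> /slidingP Hs n G ba T1 T2 p1 p2 _ Hg _ _ Ha c.
  exact: if_dir Hg Ha c Hs.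
by move=> H; apply/slidingP; apply: only_if.
Qed.
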